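(* Let $\mathcal{P}=(|K|,V)$ be a polyhedral model. For all $x\in|K|$ and every SLCS$_\eta$ formula $\Phi$: $\mathcal{P},x\models\Phi$ if and only if $\mathbb{F}(\mathcal{P}),\mathbb{F}(x)\models\Phi$.
   Context: Fix a set PL of proposition letters. A simplex $\sigma\subseteq\mathbb{R}^m$ is the convex hull of $d+1$ affinely independent points $v_0,\dots,v_d$; its faces are the simplices spanned by nonempty subsets of its vertices. Its relative interior (cell) is $\tilde\sigma=\{\sum_i\lambda_iv_i:\lambda_i\in(0,1],\sum_i\lambda_i=1\}$. A simplicial complex $K$ is a finite set of simplices in $\mathbb{R}^m$ closed under faces, any two of which intersect in a common face or in $\emptyset$. Its set of cells $\tilde K=\{\tilde\sigma:\sigma\in K\}$ is partially ordered by $\tilde\sigma_1\preceq\tilde\sigma_2$ iff $\tilde\sigma_1$ is contained in the topological closure of $\tilde\sigma_2$ (equivalently, $\sigma_1$ is a face of $\sigma_2$). The polyhedron $|K|$ is the union of the simplices of $K$ with the subspace topology; its cells partition $|K|$. A polyhedral model is $\mathcal{P}=(|K|,V)$ with $V:\mathrm{PL}\to\mathcal{P}(|K|)$ such that each $V(p)$ is a union of cells. Its cell poset model is $\mathbb{F}(\mathcal{P})=(\tilde K,\preceq,\mathcal{V})$ with $\tilde\sigma\in\mathcal{V}(p)$ iff $\tilde\sigma\subseteq V(p)$; for $x\in|K|$, $\mathbb{F}(x)$ is the unique cell containing $x$. A topological path from $x$ is a continuous $\pi:[0,1]\to|K|$ with $\pi(0)=x$. In a poset $(W,\preceq)$ a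 $\pm$-path of length $\ell\ge2$ from $w$ is $\pi:\{0,\dots,\ell\}\to W$ with $\pi(0)=w$, consecutive elements comparable under $\preceq$, $\pi(0)\preceq\pi(1)$ and $\pi(\ell)\preceq\pi(\ell-1)$. SLCS$_\eta$ formulas: $\Phi::=p\mid\neg\Phi\mid\Phi_1\wedge\Phi_2\mid\eta(\Phi_1,\Phi_2)$, $p\in\mathrm{PL}$. On polyhedral models: $x\models p$ iff $x\in V(p)$; negation, conjunction standard; $x\models\eta(\Phi_1,\Phi_2)$ iff some topological path $\pi$ from $x$ has $\pi(1)\models\Phi_2$ and $\pi(r)\models\Phi_1$ for all $r\in[0,1)$. On poset models $(W,\preceq,\mathcal{V})$: $w\models p$ iff $w\in\mathcal{V}(p)$; negation, conjunction standard; $w\models\eta(\Phi_1,\Phi_2)$ iff some $\pm$-path $\pi$ of length $\ell$ from $w$ has $\pi(\ell)\models\Phi_2$ and $\pi(i)\models\Phi_1$ for all $0\le i<\ell$. *)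

(* Defs.v *)
From HB Require Import structures.
From mathcomp Require Import all_boot all_order all_algebra.
From mathcomp Require Import finmap.
From mathcomp Require Import all_classical all_reals all_analysis.
Set Implicit Arguments. Unset Strict Implicit. Unset Printing Implicit Defensive.
Import Order.TTheory GRing.Theory Num.Theory.
Import numFieldNormedType.Exports.
Local Open Scope classical_set_scope.
Local Open Scope ring_scope.
Local Open Scope fset_scope.

Section Polyhedra.
Variables (R : realType) (m : nat).
Notation pt := 'rV[R]_m.

Definition hull (S : {fset pt}) : set pt :=
  [set x | exists l : pt -> R, (forall v, v \in S -> 0 <= l v) /\
     \sum_(v <- S) l v = 1 /\ x = \sum_(v <- S) l v *: v].

Definition relint (S : {fset pt}) : set pt :=
  [set x | exists l : pt -> R, (forall v, v \in S -> 0 < l v /\ l v <= 1) /\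
     \sum_(v <- S) l v = 1 /\ x = \sum_(v <- S) l v *: v].

Definition aff_indep (S : {fset pt}) : Prop :=
  forall l : pt -> R, \sum_(v <- S) l v = 0 -> \sum_(v <- S) l v *: v = 0 ->
    forall v, v \in S -> l v = 0.

Definition is_simplex (S : {fset pt}) : Prop := S != fset0 /\ aff_indep S.

Definition is_face (T S : {fset pt}) : Prop := T != fset0 /\ T `<=` S.

Definition simplicial_complex (K : {fset {fset pt}}) : Prop :=
  (forall S, S \in K -> is_simplex S) /\
  (forall S T, S \in K -> is_face T S -> T \in K) /\
  (forall S T, S \in K -> T \in K ->
     (hull S `&` hull T)%classic = set0 \/
     exists2 U, is_face U S /\ is_face U T & (hull S `&` hull T)%classic = hull U).

Definition polyhedron (K : {fset {fset pt}}) : set pt :=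
  (\bigcup_(S in [set S | S \in K]) hull S)%classic.

Definition poly_valuation (PL : Type) (K : {fset {fset pt}}) (V : PL -> set pt) :=
  forall p, exists C : set {fset pt}, (C `<=` [set S | S \in K])%classic /\
    V p = (\bigcup_(S in C) relint S)%classic.

End Polyhedra.
Local Close Scope fset_scope.

Inductive slcs (PL : Type) : Type :=
  | FAtom of PL
  | FNeg of slcs PL
  | FAnd of slcs PL & slcs PL
  | FEta of slcs PL & slcs PL.
Arguments FAtom {PL}. Arguments FNeg {PL}. Arguments FAnd {PL}. Arguments FEta {PL}.

Definition topo_path (R : realType) (m : nat) (P : set 'rV[R]_m) (x : 'rV[R]_m)
  (pi : R -> 'rV[R]_m) : Prop :=
  pi 0 = x /\ (forall r, r \in `[0, 1] -> P (pi r)) /\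
  {within `[(0:R), 1], continuous pi}.

Fixpoint sat_poly (R : realType) (m : nat) (PL : Type) (P : set 'rV[R]_m)
  (V : PL -> set 'rV[R]_m) (x : 'rV[R]_m) (f : slcs PL) : Prop :=
  match f with
  | FAtom p => V p x
  | FNeg g => ~ sat_poly P V x g
  | FAnd g h => sat_poly P V x g /\ sat_poly P V x h
  | FEta g h => exists pi, topo_path P x pi /\ sat_poly P V (pi 1) h /\
      (forall r, r \in `[0, 1[ -> sat_poly P V (pi r) g)
  end.

Definition pm_path (W : Type) (le : W -> W -> Prop) (w : W) (l : nat)
  (pi : nat -> W) : Prop :=
  (2 <= l)%N /\ pi 0%N = w /\
  (forall i, (i < l)%N -> le (pi i) (pi i.+1) \/ le (pi i.+1) (pi i)) /\
  le (pi 0%N) (pi 1%N) /\ le (pi l) (pi l.-1).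

Fixpoint sat_poset (W : Type) (le : W -> W -> Prop) (PL : Type)
  (val : PL -> W -> Prop) (w : W) (f : slcs PL) : Prop :=
  match f with
  | FAtom p => val p w
  | FNeg g => ~ sat_poset le val w g
  | FAnd g h => sat_poset le val w g /\ sat_poset le val w h
  | FEta g h => exists l pi, pm_path le w l pi /\ sat_poset le val (pi l) h /\
      (forall i, (i < l)%N -> sat_poset le val (pi i) g)
  end.

Section CellPoset.
Variables (R : realType) (m : nat) (K : {fset {fset 'rV[R]_m}}).

Definition cell : Type := {c : set 'rV[R]_m | exists2 S, S \in K & c = relint S}.

Definition cell_le (c1 c2 : cell) : Prop := proj1_sig c1 `<=` closure (proj1_sig c2).

Definition cell_val (PL : Type) (V : PL -> set 'rV[R]_m) (p : PL) (c : cell) : Prop :=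
  proj1_sig c `<=` V p.
End CellPoset.

(* Main.v *)
Require Import Defs.
From HB Require Import structures.
From mathcomp Require Import all_boot all_order all_algebra.
From mathcomp Require Import finmap.
From mathcomp Require Import all_classical all_reals all_analysis.
From mathcomp.algebra_tactics Require Import lra.
From mathcomp Require Import zify.
From Stdlib Require Import Lia.
Set Implicit Arguments. Unset Strict Implicit. Unset Printing Implicit Defensive.
Import Order.TTheory GRing.Theory Num.Theory.
Import numFieldNormedType.Exports.
Local Open Scope classical_set_scope.
Local Open Scope ring_scope.

Section Geo.
Variables (R : realType) (m : nat).
Notation pt := 'rV[R]_m.

Definition ext (T : {fset pt}) (l : pt -> R) (v : pt) : R := if v \in T then l v else 0.

Lemma sum_ext (T S : {fset pt}) l : fsubset T S ->
  \sum_(v <- S) ext T l v = \sum_(v <- T) l v.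
Proof.
move=> TS; rewrite -(big_fset_incl _ TS); last by move=> x _ /negbTE; rewrite /ext => ->.
by apply: eq_fbigr => x xT _; rewrite /ext xT.
Qed.

Lemma sumZ_ext (T S : {fset pt}) l : fsubset T S ->
  \sum_(v <- S) ext T l v *: v = \sum_(v <- T) l v *: v.
Proof.
move=> TS; rewrite -(big_fset_incl _ TS); last first.
  by move=> x _ /negbTE; rewrite /ext => ->; rewrite scale0r.
by apply: eq_fbigr => x xT _; rewrite /ext xT.
Qed.

Lemma bary_unique (S : {fset pt}) l l' : aff_indep S ->
  \sum_(v <- S) l v = \sum_(v <- S) l' v ->
  \sum_(v <- S) l v *: v = \sum_(v <- S) l' v *: v ->
  forall v, v \in S -> l v = l' v.
Proof.
move=> ai e1 e2 v vS; apply/eqP; rewrite -subr_eq0; apply/eqP.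
apply: (ai (fun v => l v - l' v)) => //.
  by rewrite sumrB e1 subrr.
under eq_bigr do rewrite scalerBl.
by rewrite sumrB e2 subrr.
Qed.

Lemma le_sum (S : {fset pt}) (F : pt -> R) v : (forall w, w \in S -> 0 <= F w) ->
  v \in S -> F v <= \sum_(w <- S) F w.
Proof.
move=> F0 vS; rewrite (big_fsetD1 _ vS) /= lerDl.
rewrite big_seq; apply: sumr_ge0 => i; rewrite in_fsetD1 => /andP[_]; exact: F0.
Qed.


Lemma relint_hull (S : {fset pt}) : relint S `<=` hull S.
Proof.
move=> x [l [l01 [s1 ->]]]; exists l; split => // v vS.
by have [/ltW] := l01 v vS.
Qed.

Lemma hull_relint_face (S : {fset pt}) x : hull S x ->
  exists G : {fset pt}, [/\ G != fset0, fsubset G S & relint G x].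
Proof.
move=> [l [l0 [s1 ->]]].
set G := [fset v in S | 0 < l v]%fset.
have GS : fsubset G S by apply/fsubsetP => v; rewrite !inE => /andP[].
have z v : v \in S -> v \notin G -> l v = 0.
  move=> vS; rewrite !inE vS /= => /negbTE lv.
  by apply/eqP; rewrite eq_le l0 // andbT leNgt lv.
have sG : \sum_(v <- G) l v = 1.
  by rewrite (big_fset_incl _ GS) // => v vS vG; rewrite z.
exists G; split => //.
  apply/eqP => G0; move: sG; rewrite G0 big_seq_fset0 => /eqP; by rewrite eq_sym oner_eq0.
exists l; split; [|split=> //].
  move=> v vG; have vS : v \in S by move/fsubsetP: GS => /(_ v vG).
  split; first by move: vG; rewrite !inE => /andP[].
  by rewrite -sG; apply: le_sum => // w /(fsubsetP GS) /l0.
rewrite (big_fset_incl _ GS) // => v vS vG; rewrite z // scale0r //.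
Qed.

Lemma relint_face_sub (S U : {fset pt}) x : aff_indep S -> fsubset U S ->
  relint S x -> hull U x -> fsubset S U.
Proof.
move=> ai US [l [l01 [s1 ->]]] [mu [mu0 [smu e]]].
apply/fsubsetP => v vS.
have := bary_unique ai (l := l) (l' := ext U mu) _ _ vS.
rewrite sum_ext // sumZ_ext // s1 smu e => /(_ erefl erefl).
rewrite /ext; case: ifP => // _ lv0; have [] := l01 v vS; by rewrite lv0 ltxx.
Qed.

Lemma cell_unique (K : {fset {fset pt}}) S T x : simplicial_complex K ->
  S \in K -> T \in K -> relint S x -> relint T x -> S = T.
Proof.
move=> [simp [_ inter]] SK TK xS xT.
have [aiS aiT] := (simp S SK, simp T TK).
case: (inter S T SK TK) => [E|[U [[_ US] [_ UT]] E]].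
  have : (hull S `&` hull T) x by split; exact: relint_hull.
  by rewrite E.
have xU : hull U x by rewrite -E; split; exact: relint_hull.
have SU := relint_face_sub aiS.2 US xS xU.
have TU := relint_face_sub aiT.2 UT xT xU.
apply/eqP; rewrite eqEfsubset; apply/andP; split.
  exact: fsubset_trans SU UT.
exact: fsubset_trans TU US.
Qed.


Lemma relint_ne0 (S : {fset pt}) : S != fset0 -> exists x, relint S x.
Proof.
move=> S0; pose c : R := (#|` S|%:R)^-1.
have n0 : (0 < #|` S|)%N by rewrite cardfs_gt0.
have sc : \sum_(v <- S) c = 1.
  rewrite big_const_seq count_predT iter_addr_0 /c.
  by rewrite -(mulr_natr (_^-1)) mulVf // pnatr_eq0 -lt0n.
exists (\sum_(v <- S) c *: v); exists (fun=> c); split; last by split.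
move=> v vS; have c0 : 0 < c by rewrite /c invr_gt0 ltr0n.
split=> //; rewrite -sc; apply: (@le_sum S (fun=> c) v) => // w _; exact: ltW.
Qed.

Lemma seg_relint (T S : {fset pt}) a b s : fsubset T S ->
  relint T a -> relint S b -> 0 < s -> s <= 1 ->
  relint S ((1 - s) *: a + s *: b).
Proof.
move=> TS [la [la01 [sa ->]]] [lb [lb01 [sb ->]]] s0 s1.
pose l v := (1 - s) * ext T la v + s * lb v.
have l0 v : v \in S -> 0 < l v.
  move=> vS; rewrite /l ltr_wpDl //; last by rewrite mulr_gt0 //; case: (lb01 v vS).
  apply: mulr_ge0; first by rewrite subr_ge0.
  by rewrite /ext; case: ifP => // /la01 [/ltW].
have sl : \sum_(v <- S) l v = 1.
  rewrite /l big_split /= -!mulr_sumr sum_ext // sa sb !mulr1.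
  by rewrite subrK.
exists l; split.
  move=> v vS; split; first exact: l0.
  by rewrite -sl; apply: le_sum => // w /l0 /ltW.
split => //; rewrite /l.
rewrite [RHS](eq_bigr (fun v => (1-s) *: (ext T la v *: v) + s *: (lb v *: v))).
  by rewrite big_split /= -!scaler_sumr sumZ_ext.
by move=> i _; rewrite [LHS]scalerDl -!scalerA.
Qed.


Lemma relint_closure (T S : {fset pt}) : S != fset0 -> fsubset T S ->
  relint T `<=` closure (relint S).
Proof.
move=> S0 TS y yT B nB.
have [b bS] := relint_ne0 S0.
have gc : (fun s : R => (1 - s) *: y + s *: b) @ (0:R) --> (1 - 0) *: y + 0 *: b.
  apply: cvgD; apply: cvgZr_tmp; last exact: cvg_id.
  by apply: cvgB; [exact: cvg_cst | exact: cvg_id].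
rewrite subr0 scale1r scale0r addr0 in gc.
have /nbhs_ballP [e e0 eB] := gc _ nB.
pose s := Num.min (e / 2) 1.
have s0 : 0 < s by rewrite /s lt_min ltr01 andbT divr_gt0.
have s1 : s <= 1 by rewrite /s ge_min lexx orbT.
exists ((1 - s) *: y + s *: b); split; first exact: (seg_relint TS yT bS s0 s1).
apply: (eB s); rewrite /ball /= sub0r normrN gtr0_norm //.
by rewrite /s gt_min ltr_pdivrMr // ltr_pMr // ltr1n orTb.
Qed.


Lemma cont_sum (T : topologicalType) (I : Type) (r : seq I) (F : I -> T -> pt) :
  (forall i, continuous (F i)) -> continuous (fun x => \sum_(i <- r) F i x).
Proof.
move=> Fc; elim: r => [|a r IH].
  under eq_fun do rewrite big_nil; exact: cst_continuous.
under eq_fun do rewrite big_cons.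
by move=> x; apply: cvgD; [exact: Fc | exact: IH].
Qed.

Lemma cont_sumR (T : topologicalType) (I : Type) (r : seq I) (F : I -> T -> R) :
  (forall i, continuous (F i)) -> continuous (fun x => \sum_(i <- r) F i x).
Proof.
move=> Fc; elim: r => [|a r IH].
  under eq_fun do rewrite big_nil; exact: cst_continuous.
under eq_fun do rewrite big_cons.
by move=> x; apply: cvgD; [exact: Fc | exact: IH].
Qed.

Lemma hull_closed (S : {fset pt}) : closed (hull S).
Proof.
set s := (S : seq pt); set n := size s.
have us : uniq s := fset_uniq S.
pose Phi (w : 'rV[R]_n) : pt := \sum_(i < n) w ord0 i *: nth 0 s i.
pose D := [set w : 'rV[R]_n | (forall i, 0 <= w ord0 i) /\ \sum_(i < n) w ord0 i = 1].
have -> : hull S = Phi @` D.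
  apply/seteqP; split => x.
    move=> [l [l0 [sl ->]]]; exists (\row_i l (nth 0 s i)).
      split => [i|]; first by rewrite mxE; apply: l0; rewrite mem_nth.
      by rewrite -sl [RHS](big_nth 0) big_mkord; apply: eq_bigr => i _; rewrite mxE.
    rewrite /Phi [RHS](big_nth 0) big_mkord; apply: eq_bigr => i _; rewrite mxE.
    done.
  move=> [w [w0 sw] <-].
  pose l v := \sum_(i < n | nth 0 s i == v) w ord0 i.
  have lE (j : 'I_n) : l (nth 0 s j) = w ord0 j.
    rewrite /l (big_pred1 j) // => i /=.
    by rewrite nth_uniq.
  exists l; split.
    by move=> v _; rewrite /l sumr_ge0.
  split.
    by rewrite (big_nth 0) big_mkord -sw; apply: eq_bigr => i _; rewrite lE.
  by rewrite (big_nth 0) big_mkord; apply: eq_bigr => i _; rewrite lE.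
have Phic : continuous Phi.
  apply: cont_sum => i w; apply: (@cvgZr_tmp _ _ _ (nbhs w)); exact: (@coord_continuous R 1 n ord0 i w).
have Dc : closed D.
  have -> : D = (\bigcap_(i in setT) [set w : 'rV[R]_n | 0 <= w ord0 i]) `&`
      ((fun w : 'rV[R]_n => \sum_(i < n) w ord0 i) @^-1` [set 1]).
    apply/seteqP; split => w /= [w0 sw]; split => //.
      by move=> i _; apply: w0.
    by move=> i; apply: w0.
  apply: closedI.
    apply: closed_bigI => i _.
    apply: (@preimage_closed _ _ (fun w : 'rV[R]_n => w ord0 i) [set x : R | 0 <= x]).
      by move=> w _; exact: coord_continuous.
    exact: closed_ge.
  apply: preimage_closed; last exact: closed_eq.
  by move=> w _; apply: cont_sumR => i; exact: coord_continuous.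
have Dco : compact D.
  have box : compact [set v : 'rV[R]_n | forall i, (fun=> `[(0:R), 1]%classic) i (v ord0 i)].
    exact: (@rV_compact R n (fun=> `[(0:R), 1]%classic) (fun=> @segment_compact R 0 1)).
  apply: (subclosed_compact Dc box).
  move=> w [w0 sw] i /=; rewrite in_itv /= w0 /= -sw.
  by rewrite (bigD1 i) //= lerDl sumr_ge0.
apply: compact_closed; first exact: norm_hausdorff.
apply: continuous_compact => //; exact: continuous_subspaceT.
Qed.


Section Cx.
Variable K : {fset {fset pt}}.
Hypothesis HK : simplicial_complex K.

Lemma K_simplex S : S \in K -> is_simplex S.
Proof. by case: HK => h _; apply: h. Qed.

Lemma K_face S T : S \in K -> T != fset0 -> fsubset T S -> T \in K.
Proof. by case: HK => _ [h _] SK T0 TS; apply: (h S T SK); split. Qed.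

Lemma hull_cell S z : S \in K -> hull S z ->
  exists2 G, G \in K & fsubset G S /\ relint G z.
Proof.
move=> SK /hull_relint_face [G [G0 GS Gz]]; exists G => //.
exact: K_face SK G0 GS.
Qed.

Lemma poly_cell z : polyhedron K z -> exists2 S, S \in K & relint S z.
Proof.
move=> [S /= SK zS]; have [G GK [_ Gz]] := hull_cell SK zS; by exists G.
Qed.

Lemma relint_poly S z : S \in K -> relint S z -> polyhedron K z.
Proof. by move=> SK zS; exists S => //; exact: relint_hull. Qed.

Lemma hull_sub S T z : S \in K -> T \in K -> relint T z -> hull S z -> fsubset T S.
Proof.
move=> SK TK zT zS; have [G GK [GS Gz]] := hull_cell SK zS.
by rewrite (cell_unique HK TK GK zT Gz).
Qed.

Lemma closure_sub S T : S \in K -> T \in K ->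
  relint T `<=` closure (relint S) -> fsubset T S.
Proof.
move=> SK TK TS; have [y yT] := relint_ne0 (K_simplex TK).1.
apply: (hull_sub SK TK yT).
apply: hull_closed; exact: (closureS (@relint_hull S) (TS y yT)).
Qed.

Lemma sub_closure S T : S \in K -> fsubset T S ->
  relint T `<=` closure (relint S).
Proof. move=> SK; apply: relint_closure; exact: (K_simplex SK).1. Qed.

Lemma closed_hulls (Q : {fset pt} -> Prop) :
  closed (\bigcup_(S in [set S | S \in K /\ Q S]) hull S).
Proof.
apply: closed_bigcup; last by move=> S _; exact: hull_closed.
by apply: sub_finite_set (finite_fset K) => S [].
Qed.

Lemma closure_cells (Q : {fset pt} -> Prop) (A : set pt) :
  A `<=` (\bigcup_(S in [set S | S \in K /\ Q S]) relint S) ->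
  closure A `<=` \bigcup_(S in [set S | S \in K /\ Q S]) hull S.
Proof.
move=> AS y Ay; have hc := @closed_hulls Q; apply: hc; move: y Ay; apply: closureS.
move=> y /AS [S QS yS]; exists S => //; exact: relint_hull.
Qed.

End Cx.


Definition seg (p q : pt) (t : R) : pt := (1 - t) *: p + t *: q.

Lemma seg_cont p q : continuous (seg p q).
Proof.
move=> t; apply: cvgD; apply: cvgZr_tmp; last exact: cvg_id.
by apply: cvgB; [exact: cvg_cst | exact: cvg_id].
Qed.

Lemma seg0 p q : seg p q 0 = p.
Proof. by rewrite /seg subr0 scale1r scale0r addr0. Qed.

Lemma seg1 p q : seg p q 1 = q.
Proof. by rewrite /seg subrr scale0r scale1r add0r. Qed.

Lemma seg_lt1 (Sa Sb : {fset pt}) a b t : fsubset Sb Sa -> relint Sa a -> relint Sb b ->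
  0 <= t -> t < 1 -> relint Sa (seg a b t).
Proof.
move=> ba aa bb t0 t1.
have := seg_relint ba bb aa (s := 1 - t); rewrite subr_gt0 t1 gerBl t0 subKr.
by rewrite /seg addrC => /(_ isT isT).
Qed.

Lemma seg_gt0 (Sa Sb : {fset pt}) a b t : fsubset Sa Sb -> relint Sa a -> relint Sb b ->
  0 < t -> t <= 1 -> relint Sb (seg a b t).
Proof. move=> ab aa bb t0 t1; exact: seg_relint ab aa bb t0 t1. Qed.

Definition glue (f g : R -> pt) (r : R) : pt :=
  if r <= 2^-1 then f (2 * r) else g (2 * r - 1).

Lemma glue_cont (f g : R -> pt) : continuous f -> continuous g -> f 1 = g 0 ->
  continuous (glue f g).
Proof.
move=> fc gc fg.
have fc' : continuous (fun r : R => f (2 * r)).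
  move=> r; apply: continuous_comp; last exact: fc.
  by apply: cvgM; [exact: cvg_cst | exact: cvg_id].
have gc' : continuous (fun r : R => g (2 * r - 1)).
  move=> r; apply: continuous_comp; last exact: gc.
  by apply: cvgB; [apply: cvgM; [exact: cvg_cst | exact: cvg_id] | exact: cvg_cst].
have A : {within [set r : R | r <= 2^-1], continuous (glue f g)}.
  apply: (@subspace_eq_continuous _ _ _ (fun r : R => f (2 * r))).
    by move=> r; rewrite inE /glue /from_subspace /= => hr; rewrite ifT.
  exact: continuous_subspaceT.
have B : {within [set r : R | 2^-1 <= r], continuous (glue f g)}.
  apply: (@subspace_eq_continuous _ _ _ (fun r : R => g (2 * r - 1))).
    move=> r; rewrite inE /glue /from_subspace /= => hr; case: ifP => // hr'.
    have -> : r = 2^-1 by apply/eqP; rewrite eq_le hr hr'.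
    by rewrite mulfV ?pnatr_eq0 // subrr.
  exact: continuous_subspaceT.
have cl1 : closed [set r : R | r <= 2^-1] by exact: closed_le.
have cl2 : closed [set r : R | 2^-1 <= r] by exact: closed_ge.
have := withinU_continuous cl1 cl2 A B.
have -> : [set r : R | r <= 2^-1] `|` [set r | 2^-1 <= r] = setT.
  apply/seteqP; split => // r _ /=; case: (lerP r 2^-1) => h; [left | right] => //.
  exact: ltW.
rewrite continuous_open_subspace; last exact: openT.
by move=> h r; apply: h; rewrite inE.
Qed.


Section Main.
Variable K : {fset {fset pt}}.
Hypothesis HK : simplicial_complex K.
Variables (PL : Type) (V : PL -> set pt).
Local Notation P := (polyhedron K).
Local Notation spoly := (sat_poly P V).
Local Notation sposet := (sat_poset (@cell_le R m K) (cell_val V)).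

Section Eta.
Variables (g h : slcs PL).

Definition EtaG (p : pt) := exists pi : R -> pt, [/\ continuous pi, pi 0 = p,
  (forall r, r \in `[0, 1] -> P (pi r)), spoly (pi 1) h &
  (forall r, r \in `[0, 1[ -> spoly (pi r) g)].

Lemma EtaG_sat p : EtaG p -> spoly p (FEta g h).
Proof.
move=> [pi [pc p0 pP p1 pg]]; exists pi; split => //; split => //; split => //.
exact: continuous_subspaceT.
Qed.

Lemma EtaG_glue (sig : R -> pt) p : continuous sig -> sig 0 = p ->
  (forall r, r \in `[0, 1] -> P (sig r) /\ spoly (sig r) g) -> EtaG (sig 1) -> EtaG p.
Proof.
move=> sc s0 sP [rho [rc r0 rP r1 rg]].
exists (glue sig rho); split.
- by apply: glue_cont.
- by rewrite /glue ifT ?mulr0 // invr_ge0 ler0n.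
- move=> r; rewrite in_itv /= => /andP[ra rb]; rewrite /glue; case: ifP => hr.
    by case: (sP (2 * r)) => //; rewrite in_itv /=; apply/andP; split; lra.
  have {}hr : 2^-1 < r by rewrite ltNge hr.
  by apply: rP; rewrite in_itv /=; apply/andP; split; lra.
- rewrite /glue ifF; first by rewrite mulr1 (_ : 2 - 1 = 1) //; lra.
  by apply/negbTE; rewrite -ltNge; lra.
- move=> r; rewrite in_itv /= => /andP[ra rb]; rewrite /glue; case: ifP => hr.
    by case: (sP (2 * r)) => //; rewrite in_itv /=; apply/andP; split; lra.
  have {}hr : 2^-1 < r by rewrite ltNge hr.
  by apply: rg; rewrite in_itv /=; apply/andP; split; lra.
Qed.

Lemma EtaG_seg p q : (forall r, r \in `[0, 1] -> P (seg p q r)) ->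
  (forall r, r \in `[0, 1[ -> spoly (seg p q r) g) -> spoly q h -> EtaG p.
Proof.
move=> sP sg sh; exists (seg p q); split => //.
- exact: seg_cont.
- exact: seg0.
- by rewrite seg1.
Qed.

Hypothesis IHg : forall x (c : cell K), P x -> proj1_sig c x -> (spoly x g <-> sposet c g).
Hypothesis IHh : forall x (c : cell K), P x -> proj1_sig c x -> (spoly x h <-> sposet c h).

Lemma good_pt (d : cell K) S y : S \in K -> proj1_sig d = relint S -> relint S y ->
  sposet d g -> spoly y g.
Proof.
move=> SK E yS dg; apply/(IHg (c := d)) => //; first exact: relint_poly SK yS.
by rewrite E.
Qed.

Lemma seg_in (Sj Sk : {fset pt}) p q r : fsubset Sj Sk \/ fsubset Sk Sj ->
  relint Sj p -> relint Sk q -> r \in `[0, 1] ->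
  relint Sj (seg p q r) \/ relint Sk (seg p q r).
Proof.
move=> cmp pS qS; rewrite in_itv /= => /andP[r0 r1].
have [->|rn0] := eqVneq r 0; first by left; rewrite seg0.
have rp : 0 < r by rewrite lt_neqAle eq_sym rn0 r0.
case: cmp => sub; first by right; exact: seg_gt0 sub pS qS rp r1.
have [->|rn1] := eqVneq r 1; first by right; rewrite seg1.
by left; apply: seg_lt1 sub pS qS r0 _; rewrite lt_neqAle rn1 r1.
Qed.

Lemma eta_back (c : cell K) x : proj1_sig c x ->
  (exists l pth, pm_path (@cell_le R m K) c l pth /\ sposet (pth l) h /\
     forall i, (i < l)%N -> sposet (pth i) g) -> spoly x (FEta g h).
Proof.
move=> xc [l [pth [[l2 [p0 [cmp [_ lst]]]] [hl gl]]]].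
suff key : forall n j p, (j + n.+1 = l)%N -> proj1_sig (pth j) p -> EtaG p.
  apply: EtaG_sat; apply: (key l.-1 0%N x); first by lia.
  by rewrite p0.
elim=> [|n IHn] j p jl pj.
  case: (proj2_sig (pth j)) => Sj SjK Ej; case: (proj2_sig (pth l)) => Sl SlK El.
  have [q qSl] := relint_ne0 (K_simplex HK SlK).1.
  have jl' : j = l.-1 by lia.
  have sub : fsubset Sl Sj.
    apply: (closure_sub HK SjK SlK); rewrite -Ej -El; rewrite jl'; exact: lst.
  rewrite Ej in pj.
  apply: (EtaG_seg (q := q)).
  - move=> r; rewrite in_itv /= => /andP[r0 r1].
    have [->|r1'] := eqVneq r 1; first by rewrite seg1; exact: relint_poly SlK qSl.
    apply: (relint_poly SjK); apply: seg_lt1 sub pj qSl r0 _.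
    by rewrite lt_neqAle r1' r1.
  - move=> r; rewrite in_itv /= => /andP[r0 r1].
    apply: (good_pt SjK Ej); first exact: seg_lt1 sub pj qSl r0 r1.
    by apply: gl; lia.
  - apply/(IHh (c := pth l)); [exact: relint_poly SlK qSl | by rewrite El | done].
case: (proj2_sig (pth j)) => Sj SjK Ej; case: (proj2_sig (pth j.+1)) => Sk SkK Ek.
have [q qSk] := relint_ne0 (K_simplex HK SkK).1.
have cmp' : fsubset Sj Sk \/ fsubset Sk Sj.
  case: (cmp j _); first by lia.
    by rewrite /cell_le Ej Ek => h1; left; exact: (closure_sub HK SkK SjK).
  by rewrite /cell_le Ej Ek => h1; right; exact: (closure_sub HK SjK SkK).
rewrite Ej in pj.
apply: (EtaG_glue (sig := seg p q)).
- exact: seg_cont.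
- exact: seg0.
- move=> r r01; case: (seg_in cmp' pj qSk r01) => hs.
    split; first exact: relint_poly SjK hs.
    by apply: (good_pt SjK Ej hs); apply: gl; lia.
  split; first exact: relint_poly SkK hs.
  by apply: (good_pt SkK Ek hs); apply: gl; lia.
- rewrite seg1; apply: (IHn j.+1); first by lia.
  by rewrite Ek.
Qed.

Definition mkcell S (SK : S \in K) : cell K :=
  exist _ (relint S) (ex_intro2 _ _ S SK erefl).

Section Reach.
Variable c : cell K.

Definition reach (d : cell K) := exists l (pth : nat -> cell K), [/\ pth 0%N = c, pth l = d,
  (forall i, (i <= l)%N -> sposet (pth i) g) &
  (forall i, (i < l)%N -> cell_le (pth i) (pth i.+1) \/ cell_le (pth i.+1) (pth i))].

Lemma reach0 : sposet c g -> reach c.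
Proof. by move=> cg; exists 0%N, (fun=> c); split => // i; rewrite leqn0 => /eqP ->. Qed.

Lemma reach_ext d d' : reach d -> sposet d' g ->
  (cell_le d d' \/ cell_le d' d) -> reach d'.
Proof.
move=> [l [pth [p0 pl pg pc]]] dg dd.
exists l.+1, (fun i => if (i <= l)%N then pth i else d'); split.
- by rewrite leq0n.
- by rewrite ltnn.
- move=> i il; case: ifP => // /pg //.
- move=> i il; case: ifP => hi; case: ifP => hi1.
  + by apply: pc.
  + have -> : i = l by lia.
    by rewrite pl.
  + lia.
  + lia.
Qed.

Lemma reach_final d dend : sposet c g -> reach d -> cell_le dend d -> sposet dend h ->
  exists l pth, pm_path (@cell_le R m K) c l pth /\ sposet (pth l) h /\
     forall i, (i < l)%N -> sposet (pth i) g.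
Proof.
move=> cg [l [pth [p0 pl pg pc]]] dd dh.
have refl (e : cell K) : cell_le e e by move=> y ey; exact: subset_closure.
exists l.+2, (fun i => if i == 0%N then c else if (i <= l.+1)%N then pth i.-1 else dend).
split; [split; [done | split; [done | split; [| split]]] | split].
- move=> i il; case: eqP => [-> /=|i0].
    case: (l =P 0%N) => [l0|ln0]; first by left; rewrite /= -p0; exact: refl.
    by left; rewrite /= -p0; exact: refl.
  case: ifP => hi; case: ifP => hi1.
  + have -> : i = i.-1.+1 by lia.
    by rewrite /=; apply: pc; lia.
  + have -> : i = l.+1 by lia.
    by rewrite /= pl; right.
  + lia.
  + lia.
- by rewrite /= -p0; exact: refl.
- by rewrite ltnn /= leqnn pl.
- by rewrite /= ltnn.
- move=> i il; case: eqP => // i0; rewrite ifT; last by lia.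
  by apply: pg; lia.
Qed.

End Reach.

Lemma eta_fwd (c : cell K) x : P x -> proj1_sig c x -> spoly x (FEta g h) ->
  exists l pth, pm_path (@cell_le R m K) c l pth /\ sposet (pth l) h /\
     forall i, (i < l)%N -> sposet (pth i) g.
Proof.
move=> Px xc [ga [[g0 [gP gc]] [g1 gg]]].
have i1 : (1:R) \in `[0, 1] by rewrite in_itv /= ler01 lexx.
have [Send SendK zS] := poly_cell HK (gP 1 i1).
pose E := \bigcup_(S in [set S | S \in K /\ ~ fsubset Send S]) hull S.
have cE : closed E by exact: closed_hulls.
have nE : ~ E (ga 1).
  move=> [S [SK nsub] zS']; apply: nsub; exact: (hull_sub HK SK SendK zS zS').
have [r0 [r00 r01 nEr0]] : exists r0, [/\ 0 <= r0, r0 < 1 & ~ E (ga r0)].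
  have := (subspace_continuousP _ _).1 gc 1 i1.
  move=> /(_ (~` E)); rewrite /= => /(_ (open_nbhs_nbhs (conj (closed_openC cE) nE))).
  rewrite /within /= => /nbhs_ballP [e e0 eB].
  pose r0 := 1 - Num.min (e / 2) (2^-1).
  have m0 : 0 < Num.min (e / 2) (2^-1) by rewrite lt_min divr_gt0 // invr_gt0 ltr0n.
  have m1 : Num.min (e / 2) (2^-1) <= 2^-1 by rewrite ge_min lexx orbT.
  have m2 : Num.min (e / 2) (2^-1) < e.
    by rewrite gt_min ltr_pdivrMr // ltr_pMr // ltr1n orTb.
  exists r0; split; rewrite /r0; [lra | lra |].
  apply: (eB (1 - Num.min (e / 2) 2^-1)).
    rewrite /ball /= opprB addrC subrK ger0_norm; [exact: m2 | exact: ltW].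
  rewrite in_itv /=; apply/andP; split; lra.
have r0i : r0 \in `[0, 1] by rewrite in_itv /= r00 ltW.
have [D DK zD] := poly_cell HK (gP r0 r0i).
have subD : fsubset Send D.
  case/boolP: (fsubset Send D) => // nsub; exfalso; apply: nEr0.
  exists D; first by split => //; apply/negP.
  exact: relint_hull.
have cg : sposet c g.
  apply/(IHg Px xc); rewrite -g0; apply: (gg 0); by rewrite in_itv /= lexx ltr01.
have good r : 0 <= r -> r <= r0 -> forall S (SK : S \in K), relint S (ga r) ->
    sposet (mkcell SK) g.
  move=> rr0 rr1 S SK zSr; apply/(IHg (c := mkcell SK) (relint_poly SK zSr) zSr).
  apply: (gg r); rewrite in_itv /=; apply/andP; split => //; lra.
pose Z := ga @` `[0, r0].
pose U := [set y | exists2 d : cell K, reach c d & proj1_sig d y].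
have Zc : connected Z.
  apply: connected_continuous_connected.
    by apply/connected_intervalP; exact: interval_is_interval.
  apply: continuous_subspaceW gc => r; rewrite /= !in_itv /= => /andP[a b].
  by rewrite a /=; lra.
have ZP y : Z y -> exists r, [/\ 0 <= r, r <= r0 & ga r = y].
  by move=> [r]; rewrite /= in_itv /= => /andP[a b] <-; exists r.
have Ur0 : U (ga r0).
  apply: contrapT => nU; apply: ((connectedPn Z).2 _ Zc).
  exists (fun b => if b then Z `&` ~` U else Z `&` U); split.
  - case.
      exists (ga r0); split => //; exists r0 => //.
      by rewrite /= in_itv /= r00 lexx.
    exists x; split; first by exists 0 => //; rewrite /= in_itv /= lexx r00.
    by exists c; [exact: (reach0 cg) | exact: xc].
  - apply/seteqP; split => y /=.
      by move=> Zy; case: (pselect (U y)) => Uy; [left | right].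
    by case=> -[].
  - split.
    + apply/seteqP; split => // y [cl [Zy nUy]]; apply: nUy.
      have := @closure_cells K (fun S => exists2 d : cell K, reach c d & proj1_sig d = relint S) (Z `&` U).
      case/(_ _ y cl).
        move=> y' [_ [d rd dy']]; case: (proj2_sig d) => S SK dS.
        by exists S; [split => //; exists d | rewrite -dS].
      move=> S' [S'K [d' rd' d'S']] yS'.
      have [q [rr0 rr1 gr]] := ZP y Zy.
      have Py : P y by rewrite -gr; apply: gP; rewrite in_itv /= rr0 /=; lra.
      have [G GK Gy] := poly_cell HK Py.
      have GS' := hull_sub HK S'K GK Gy yS'.
      exists (mkcell GK) => //.
      apply: (reach_ext rd' (good q rr0 rr1 G GK _)); first by rewrite gr.
      right; rewrite /cell_le d'S' /=.
exact: (sub_closure HK S'K GS').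
    + apply/seteqP; split => // y [[Zy [d rd dy]] cl].
      have := @closure_cells K (fun S => exists2 y', (Z `&` ~` U) y' & relint S y') (Z `&` ~` U).
      case/(_ _ y cl).
        move=> y' [Zy' nUy']; have [q [rr0 rr1 gr]] := ZP y' Zy'.
        have Py' : P y' by rewrite -gr; apply: gP; rewrite in_itv /= rr0 /=; lra.
        have [S SK Sy'] := poly_cell HK Py'.
        by exists S => //; split => //; exists y'.
      move=> S' [S'K [y' [Zy' nUy'] y'S']] yS'.
      case: (proj2_sig d) => Sd SdK dSd.
      have ySd : relint Sd y by rewrite -dSd.
      have SdS' := hull_sub HK S'K SdK ySd yS'.
      have [q [rr0 rr1 gr]] := ZP y' Zy'.
      apply: nUy'; exists (mkcell S'K) => //.
      apply: (reach_ext rd (good q rr0 rr1 S' S'K _)); first by rewrite gr.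
      by left; rewrite /cell_le dSd /=; exact: (sub_closure HK S'K SdS').
have [d' rd' d'y] := Ur0.
case: (proj2_sig d') => S' S'K d'S'.
have eS' : S' = D by apply: (cell_unique HK S'K DK _ zD); rewrite -d'S'.
apply: (reach_final cg rd' (dend := mkcell SendK)).
  by rewrite /cell_le d'S' /=; apply: (sub_closure HK S'K); rewrite eS'.
by apply/(IHh (c := mkcell SendK) (gP 1 i1) zS).
Qed.

End Eta.

Hypothesis HV : poly_valuation K V.

Lemma main_equiv f : forall x (c : cell K), P x -> proj1_sig c x ->
  (spoly x f <-> sposet c f).
Proof.
elim: f => [p|f IH|f1 IH1 f2 IH2|f1 IH1 f2 IH2] x c Px xc /=.
- split; last by move=> hc; exact: hc x xc.
  move=> Vx y cy; case: (HV p) => C [CK E]; rewrite E in Vx *.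
  case: Vx => S CS Sx; case: (proj2_sig c) => T TK cT.
  have eST : S = T by apply: (cell_unique HK (CK _ CS) TK Sx); rewrite -cT.
  by exists S => //; rewrite eST -cT.
- by split => H1 H2; apply: H1; apply/(IH x c Px xc).
- by rewrite (IH1 x c Px xc) (IH2 x c Px xc).
- split; first exact: (eta_fwd IH1 IH2 Px xc).
  exact: (eta_back IH1 IH2 xc).
Qed.

End Main.

End Geo.

Unset Implicit Arguments.

Theorem theorem1 (R : realType) (m : nat) (PL : Type)
  (K : {fset {fset 'rV[R]_m}}) (V : PL -> set 'rV[R]_m) :
  simplicial_complex K -> poly_valuation K V ->
  forall (x : 'rV[R]_m), polyhedron K x ->
  forall (c : cell K), proj1_sig c x ->
  forall (f : slcs PL),
    sat_poly (polyhedron K) V x f <-> sat_poset (@cell_le R m K) (cell_val V) c f.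
Proof.
move=> HK HV x Px c xc f; exact: (main_equiv HK HV f Px xc).
Qed.
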